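(* For every integer $t\ge1$, $\mathbf{N}^{(t)}=\mathbf{N}^t$.
   Context: Setting: a random colored substitution network with $\lambda$ colors: for each color $i\in\{1,\dots,\lambda\}$ there are finite arc-colored directed networks $R_{i1},\dots,R_{iq_i}$, each with distinguished nodes $A,B$, and probabilities $p_{ik}>0$ with $\sum_k p_{ik}=1$. One substitution step replaces every arc $(u,w)$ of color $i$ independently by a copy of $R_{ik}$ with probability $p_{ik}$, identifying $A$ with $u$ and $B$ with $w$ (other nodes new). $\deg_j^+(G:v)$, $\deg_j^-(G:v)$ denote the numbers of $j$-colored arcs leaving, resp. entering, $v$ in $G$. $\mathbf{N}$ is the $2\lambda\times2\lambda$ block matrix $(\overline{\mathbf{N}}_{ij})_{i,j=1}^\lambda$ with \[ \overline{\mathbf{N}}_{ij}=\sum_{k=1}^{q_i}p_{ik}\begin{pmatrix}\deg_j^+(R_{ik}:A)&\deg_j^-(R_{ik}:A)\\ \deg_j^+(R_{ik}:B)&\deg_j^-(R_{ik}:B)\end{pmatrix}. \] $\mathbf{N}^{(t)}$ is the $2\lambda\times2\lambda$ block matrix $(\overline{\mathbf{N}}^{(t)}_{ij})$ whose $2\times2$ block $\overline{\mathbf{N}}^{(t)}_{ij}$ has entries: (row 1) the expected number of $j$-colored arcs leaving, resp. entering, the node $A$, and (row 2) the expected number of $j$-colored arcs leaving, resp. entering, the node $B$, in the network obtained by starting from a single $i$-colored arc from $A$ to $B$ and performing $t$ successive substitution steps. *)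

(* Defs.v *)
From mathcomp Require Import all_boot all_order all_algebra.
Set Implicit Arguments. Unset Strict Implicit. Unset Printing Implicit Defensive.
Import Order.TTheory GRing.Theory Num.Theory.
Local Open Scope ring_scope.

(* An arc-colored directed (multi)network with [lam] colors.
   Nodes are 0, ..., nnodes-1; an arc is (source, target, color).
   The distinguished nodes are A = 0 and B = 1. *)
Record net (lam : nat) := Net { nnodes : nat; arcs : seq (nat * nat * 'I_lam) }.

Definition nodeA := 0%N.
Definition nodeB := 1%N.

Section Subst.
Variables (R : realFieldType) (lam : nat).
(* rules i = [:: (R_i1, p_i1); ...; (R_iq_i, p_iq_i)] *)
Variable rules : 'I_lam -> seq (net lam * R).

Definition well_formed (G : net lam) : bool :=
  (2 <= nnodes G)%N &&
  all (fun a : nat * nat * 'I_lam => (a.1.1 < nnodes G)%N && (a.1.2 < nnodes G)%N) (arcs G).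

Definition valid_rules : Prop :=
  forall i : 'I_lam,
    [/\ all (fun rp => well_formed rp.1) (rules i),
        all (fun rp => 0 < rp.2) (rules i)
      & \sum_(rp <- rules i) rp.2 = 1].

(* Copy of R replacing arc (u,w), new nodes numbered from [cur] on. *)
Definition relabel (cur u w : nat) (j : nat) : nat :=
  if j == 0%N then u else if j == 1%N then w else (cur + j - 2)%N.

Definition copy_arcs (cur u w : nat) (H : net lam) : seq (nat * nat * 'I_lam) :=
  [seq (relabel cur u w a.1.1, relabel cur u w a.1.2, a.2) | a <- arcs H].

(* All joint independent choices for the arcs [as], with their probability,
   the resulting arc list and the resulting node count. *)
Fixpoint expand (cur : nat) (as_ : seq (nat * nat * 'I_lam))
  : seq (R * seq (nat * nat * 'I_lam) * nat) :=
  match as_ with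
  | [::] => [:: (1, [::], cur)]
  | a :: as' =>
      flatten [seq [seq (rp.2 * x.1.1, copy_arcs cur a.1.1 a.1.2 rp.1 ++ x.1.2, x.2)
                   | x <- expand (cur + nnodes rp.1 - 2)%N as']
              | rp <- rules a.2]
  end.

Definition step (G : net lam) : seq (R * net lam) :=
  [seq (x.1.1, Net x.2 x.1.2) | x <- expand (nnodes G) (arcs G)].

Definition step_dist (D : seq (R * net lam)) : seq (R * net lam) :=
  flatten [seq [seq (wG.1 * y.1, y.2) | y <- step wG.2] | wG <- D].

Definition single_arc (i : 'I_lam) : net lam := Net 2 [:: (nodeA, nodeB, i)].

Definition dist_after (t : nat) (i : 'I_lam) : seq (R * net lam) :=
  iter t step_dist [:: (1, single_arc i)].

Definition deg_out (G : net lam) (j : nat) (v : nat) : nat :=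
  count (fun a : nat * nat * 'I_lam => (a.1.1 == v) && (nat_of_ord a.2 == j)) (arcs G).
Definition deg_in (G : net lam) (j : nat) (v : nat) : nat :=
  count (fun a : nat * nat * 'I_lam => (a.1.2 == v) && (nat_of_ord a.2 == j)) (arcs G).

(* Index conventions for the 2lam x 2lam block matrices: row 2*i + r with
   r = 0 for node A, r = 1 for node B; column 2*j + s with s = 0 for
   "leaving" (deg^+) and s = 1 for "entering" (deg^-). *)
Definition degs (G : net lam) (j : nat) (r s : nat) : nat :=
  let v := if r == 0%N then nodeA else nodeB in
  if s == 0%N then deg_out G j v else deg_in G j v.

Definition rules_nat (i : nat) : seq (net lam * R) :=
  match (insub i : option 'I_lam) with Some i' => rules i' | None => [::] end.

Definition Nmat : 'M[R]_(lam * 2) :=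
  \matrix_(a, b)
    \sum_(rp <- rules_nat (a %/ 2)%N)
       rp.2 * (degs rp.1 (b %/ 2)%N (a %% 2)%N (b %% 2)%N)%:R.

Definition dist_after_nat (t i : nat) : seq (R * net lam) :=
  match (insub i : option 'I_lam) with Some i' => dist_after t i' | None => [::] end.

Definition Nmat_t (t : nat) : 'M[R]_(lam * 2) :=
  \matrix_(a, b)
    \sum_(wG <- dist_after_nat t (a %/ 2)%N)
       wG.1 * (degs wG.2 (b %/ 2)%N (a %% 2)%N (b %% 2)%N)%:R.

End Subst.

(* Main.v *)
Require Import Defs.
From mathcomp Require Import all_boot all_order all_algebra.
From mathcomp Require Import zify ring.
Set Implicit Arguments. Unset Strict Implicit. Unset Printing Implicit Defensive.
Import Order.TTheory GRing.Theory Num.Theory.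
Local Open Scope ring_scope.

Lemma big_seq_all (R : realFieldType) (T : Type) (p : pred T) (F G : T -> R) l :
  all p l -> (forall x, p x -> F x = G x) -> \sum_(x <- l) F x = \sum_(x <- l) G x.
Proof.
move=> + H; elim: l => [|x l IH]; first by rewrite !big_nil.
by move=> /= /andP[px pl]; rewrite !big_cons H // IH.
Qed.

Lemma sum_split2 (R : realFieldType) (F : nat -> R) n :
  \sum_(0 <= k < n * 2) F k = \sum_(0 <= i < n) (F (i * 2)%N + F (i * 2 + 1)%N).
Proof.
elim: n => [|n IH]; first by rewrite !big_geq.
rewrite mulSnr addn2 !big_nat_recr //= IH addrA addn1 //.
Qed.

Definition proj (lam : nat) (s : nat) (a : nat * nat * 'I_lam) : nat :=
  if s == 0%N then a.1.1 else a.1.2.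
Definition vr (r : nat) : nat := if r == 0%N then 0%N else 1%N.

Definition Pd (lam : nat) (s v j : nat) (a : nat * nat * 'I_lam) : bool :=
  (proj s a == v) && (nat_of_ord a.2 == j).

Lemma degsE lam (G : net lam) j r s : degs G j r s = count (Pd s (vr r) j) (arcs G).
Proof. by rewrite /degs /deg_out /deg_in /Pd /proj /vr; case: (s == 0%N). Qed.

Lemma count_copy lam (H : net lam) cur u w s v j : (2 <= cur)%N -> (v < 2)%N ->
  count (Pd s v j) (copy_arcs cur u w H) =
  ((u == v) * count (Pd s 0 j) (arcs H) + (w == v) * count (Pd s 1 j) (arcs H))%N.
Proof.
move=> hc hv; rewrite /copy_arcs count_map.
elim: (arcs H) => [|a l IH] /=; first by rewrite !muln0.
rewrite IH {1}/Pd.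
have -> : proj s (relabel cur u w a.1.1, relabel cur u w a.1.2, a.2) =
          relabel cur u w (proj s a) by rewrite /proj; case: (s == 0%N).
rewrite /Pd -/(Pd s 0 j) -/(Pd s 1 j) /=.
case: (proj s a) => [|[|x]]; rewrite /relabel /=.
- by case: (u == v); case: (nat_of_ord a.2 == j) => /=; lia.
- by case: (w == v); case: (nat_of_ord a.2 == j) => /=; lia.
- have -> : ((cur + x.+2 - 2)%N == v) = false by apply/negbTE; lia.
  by [].
Qed.

Definition Mf (R : realFieldType) lam (rules : 'I_lam -> seq (net lam * R)) s j
  (i : 'I_lam) (s' : nat) : R :=
  \sum_(rp <- rules i) rp.2 * (count (Pd s s' j) (arcs rp.1))%:R.

Lemma all_flat (T : Type) (p : pred T) (l : seq (seq T)) :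
  all p (flatten l) = all (all p) l.
Proof. by elim: l => //= x l IH; rewrite all_cat IH. Qed.

Lemma expand_props (R : realFieldType) lam (rules : 'I_lam -> seq (net lam * R)) s v j :
  valid_rules rules -> (v < 2)%N -> forall as_ cur, (2 <= cur)%N ->
  [/\ \sum_(x <- expand rules cur as_) x.1.1 = 1,
      \sum_(x <- expand rules cur as_) x.1.1 * (count (Pd s v j) x.1.2)%:R
       = \sum_(a <- as_) ((a.1.1 == v)%:R * Mf rules s j a.2 0
                          + (a.1.2 == v)%:R * Mf rules s j a.2 1)
    & all (fun x => cur <= x.2)%N (expand rules cur as_)].
Proof.
move=> hr hv; elim=> [|a as' IH] cur hc /=.
  by split; rewrite ?big_seq1 ?big_nil //= ?mul1r ?leqnn.
have [wf _ sum1] := hr a.2.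
have Hc : forall rp : net lam * R, well_formed rp.1 ->
    (2 <= cur + nnodes rp.1 - 2)%N /\ (cur <= cur + nnodes rp.1 - 2)%N.
  by move=> rp /andP[h _]; lia.
pose S := \sum_(a <- as') ((a.1.1 == v)%:R * Mf rules s j a.2 0
                          + (a.1.2 == v)%:R * Mf rules s j a.2 1).
split.
- rewrite big_flatten /= big_map.
  transitivity (\sum_(rp <- rules a.2) rp.2); last exact: sum1.
  apply: (big_seq_all wf) => rp /Hc [h _].
  by case: (IH _ h) => S1 _ _; rewrite big_map -mulr_sumr S1 mulr1.
- rewrite big_flatten /= big_map big_cons.
  transitivity (\sum_(rp <- rules a.2)
     (rp.2 * (((a.1.1 == v) * count (Pd s 0 j) (arcs rp.1)
              + (a.1.2 == v) * count (Pd s 1 j) (arcs rp.1))%N)%:R + rp.2 * S)).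
    apply: (big_seq_all wf) => rp /Hc [h _].
    case: (IH _ h) => S1 S2 _; rewrite big_map; rewrite -/S in S2.
    under eq_bigr => x _ do rewrite count_cat natrD mulrDr.
    rewrite big_split /= -mulr_suml -mulr_sumr S1 mulr1.
    rewrite (count_copy _ _ _ _ _ hc hv); congr (_ + _).
    by rewrite -S2 mulr_sumr; apply: eq_bigr => x _; rewrite mulrA.
  rewrite big_split /= -mulr_suml sum1 mul1r; congr (_ + _).
  rewrite /Mf !mulr_sumr -big_split; apply: eq_bigr => rp _.
  rewrite natrD !natrM /=; ring.
- rewrite all_flat all_map; apply: (sub_all _ wf) => rp /Hc [h h'] /=.
  rewrite all_map; case: (IH _ h) => _ _ A.
  by apply: (sub_all _ A) => x /= hx; apply: leq_trans hx.
Qed.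

Lemma vr_lt2 r : (vr r < 2)%N.
Proof. by rewrite /vr; case: ifP. Qed.

Lemma step_sum (R : realFieldType) lam (rules : 'I_lam -> seq (net lam * R)) G r l :
  valid_rules rules -> (2 <= nnodes G)%N ->
  \sum_(y <- step rules G) y.1 * (degs y.2 (l %/ 2) r (l %% 2))%:R
  = \sum_(a <- arcs G) ((a.1.1 == vr r)%:R * Mf rules (l %% 2) (l %/ 2) a.2 0
                       + (a.1.2 == vr r)%:R * Mf rules (l %% 2) (l %/ 2) a.2 1).
Proof.
move=> hr hG; rewrite /step big_map.
under eq_bigr do rewrite degsE /=.
by case: (@expand_props _ _ rules (l %% 2) (vr r) (l %/ 2) hr (vr_lt2 r) (arcs G) (nnodes G) hG).
Qed.

Lemma step_all (R : realFieldType) lam (rules : 'I_lam -> seq (net lam * R)) G :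
  valid_rules rules -> (2 <= nnodes G)%N ->
  all (fun y => 2 <= nnodes y.2)%N (step rules G).
Proof.
move=> hr hG; rewrite /step all_map.
case: (@expand_props _ _ rules 0 0 0 hr (isT : (0 < 2)%N) (arcs G) (nnodes G) hG) => _ _ A.
by apply: (sub_all _ A) => x /= hx; apply: leq_trans hx.
Qed.

Definition nm (R : realFieldType) lam (rules : 'I_lam -> seq (net lam * R)) k l : R :=
  \sum_(rp <- rules_nat rules (k %/ 2)) rp.2 * (degs rp.1 (l %/ 2) (k %% 2) (l %% 2))%:R.

Lemma nm_Mf (R : realFieldType) lam (rules : 'I_lam -> seq (net lam * R)) (i : 'I_lam) s' l :
  (s' < 2)%N -> nm rules (i * 2 + s') l = Mf rules (l %% 2) (l %/ 2) i s'.
Proof.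
move=> hs; rewrite /nm /Mf divnMDl // divn_small // addn0 modnMDl modn_small //.
rewrite /rules_nat valK; apply: eq_bigr => rp _; rewrite degsE.
by case: s' hs => [|[|]].
Qed.

Lemma natr_count (R : realFieldType) (T : Type) (p : pred T) l :
  (count p l)%:R = \sum_(a <- l) (p a)%:R :> R.
Proof. by elim: l => [|x l IH]; rewrite ?big_nil ?big_cons //= natrD IH. Qed.

Lemma d0 x : ((x * 2) %/ 2 = x)%N. Proof. by rewrite mulnK. Qed.
Lemma m0 x : ((x * 2) %% 2 = 0)%N. Proof. by rewrite modnMl. Qed.
Lemma d1 x : ((x * 2 + 1) %/ 2 = x)%N. Proof. by rewrite divnMDl // addn0. Qed.
Lemma m1 x : ((x * 2 + 1) %% 2 = 1)%N. Proof. by rewrite modnMDl. Qed.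

Lemma deg_row (R : realFieldType) lam (rules : 'I_lam -> seq (net lam * R)) G r l :
  \sum_(0 <= k < lam * 2) (degs G (k %/ 2) r (k %% 2))%:R * nm rules k l
  = \sum_(a <- arcs G) ((a.1.1 == vr r)%:R * Mf rules (l %% 2) (l %/ 2) a.2 0
                       + (a.1.2 == vr r)%:R * Mf rules (l %% 2) (l %/ 2) a.2 1).
Proof.
under eq_bigr do rewrite degsE natr_count mulr_suml.
rewrite exchange_big; apply: eq_bigr => a _.
rewrite sum_split2 big_mkord.
under eq_bigr => i _ do rewrite d0 m0 d1 m1.
rewrite (bigD1 a.2) //= big1 ?addr0.
  rewrite (@nm_Mf _ _ rules a.2 1 l) // -[(a.2 * 2)%N]addn0 (@nm_Mf _ _ rules a.2 0 l) //.
  by rewrite /Pd /proj /= eqxx !andbT.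
move=> i hi.
have hn : (nat_of_ord a.2 == nat_of_ord i) = false by apply/negbTE; rewrite eq_sym.
rewrite /Pd /= hn !andbF.
by rewrite !mul0r addr0.
Qed.

Lemma dist_succ (R : realFieldType) lam (rules : 'I_lam -> seq (net lam * R)) t i :
  dist_after_nat rules t.+1 i = step_dist rules (dist_after_nat rules t i).
Proof. by rewrite /dist_after_nat; case: insub. Qed.

Lemma dist_all (R : realFieldType) lam (rules : 'I_lam -> seq (net lam * R)) t i :
  valid_rules rules -> all (fun wG => 2 <= nnodes wG.2)%N (dist_after_nat rules t i).
Proof.
move=> hr; elim: t => [|t IH]; first by rewrite /dist_after_nat; case: insub.
rewrite dist_succ /step_dist all_flat all_map.
apply: (sub_all _ IH) => wG /= h; rewrite all_map.
by apply: (sub_all _ (step_all hr h)) => y /= hy.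
Qed.

Lemma Nmat_t_S (R : realFieldType) lam (rules : 'I_lam -> seq (net lam * R)) t :
  valid_rules rules -> Nmat_t rules t.+1 = Nmat_t rules t *m Nmat rules.
Proof.
move=> hr; apply/matrixP => a b; rewrite mxE [RHS]mxE dist_succ /step_dist big_flatten big_map /=.
transitivity (\sum_(wG <- dist_after_nat rules t (a %/ 2))
   wG.1 * \sum_(k < lam * 2) (degs wG.2 (k %/ 2) (a %% 2) (k %% 2))%:R * Nmat rules k b).
  apply: (big_seq_all (dist_all t (a %/ 2) hr)) => wG h.
  rewrite big_map; under eq_bigr do rewrite /= -mulrA.
  rewrite -(@mulr_sumr _ _ _ _ _ wG.1) step_sum //; congr (_ * _).
  rewrite -(deg_row rules wG.2 (a %% 2) b) big_mkord; apply: eq_bigr => k _.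
  by rewrite mxE.

under [LHS]eq_bigr => wG _ do rewrite mulr_sumr.
rewrite exchange_big; apply: eq_bigr => k _; rewrite /= !mxE mulr_suml.
by apply: eq_bigr => wG _; rewrite mulrA.
Qed.

Lemma Nmat_t_0 (R : realFieldType) lam (rules : 'I_lam -> seq (net lam * R)) :
  Nmat_t rules 0 = 1%:M.
Proof.
apply/matrixP => a b; rewrite !mxE.
have ha : (a %/ 2 < lam)%N by rewrite ltn_divLR.
rewrite /dist_after_nat insubT /= big_seq1 mul1r degsE /= /Pd /proj /vr /nodeA /nodeB /= addn0.
congr (nat_of_bool _ )%:R.
have -> : (a == b) = (nat_of_ord a == nat_of_ord b) by [].
case: ifP => /eqP h1; case: ifP => /eqP h2;
  case: eqP => h3; case: eqP => h4 //=; lia.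
Qed.

Theorem mainTheorem5 (R : realFieldType) (lam : nat)
    (rules : 'I_lam -> seq (net lam * R)) (t : nat) :
  valid_rules rules -> (1 <= t)%N ->
  Nmat_t rules t = (Nmat rules) ^+ t.
Proof.
move=> hr _; elim: t => [|t IH].
  by rewrite expr0 Nmat_t_0 idmxE.
by rewrite Nmat_t_S // IH exprSr -mulmxE.
Qed.
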